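(* Let $\phi$ be a probability density on $\mathbb{R}$ and consider the location-scale family $f(x;\mu,\sigma)=\sigma^{-1}\phi((x-\mu)/\sigma)$, $(\mu,\sigma)\in\mathbb{R}\times(0,\infty)$. Let $X_1,\dots,X_n,Y$ be iid from $f(\cdot;\mu_0,\sigma_0)$. Define $$\Lambda_n(\boldsymbol{x}_n,y)=\frac{\sup_{\mu,\sigma}f(y;\mu,\sigma)\prod_{i=1}^n f(x_i;\mu,\sigma)}{\sup_{\mu,\mu_y,\sigma}f(y;\mu_y,\sigma)\prod_{i=1}^n f(x_i;\mu,\sigma)}$$ (i.e. the full model lets $Y$ have its own location $\mu_y$ with common scale $\sigma$), and assume both suprema are finite and positive almost surely. Then $\Lambda_n(\boldsymbol{X}_n,Y)$ (equivalently $-2\log\Lambda_n(\boldsymbol{X}_n,Y)$) is a pivotal quantity: its distribution equals that of $\Lambda_n(Z_1,\dots,Z_n,Z_0)$ with $Z_0,\dots,Z_n$ iid with density $\phi$, and hence does not depend on $(\mu_0,\sigma_0)$. Consequently, if this distribution is continuous at its $1-\alpha$ quantile, the parametric-bootstrap prediction region $\{y:-2\log\Lambda_n(\boldsymbol{x}_n,y)\le\lambda^*_{1-\alpha}\}$ (with $\lambda^*_{1-\alpha}$ the $1-\alpha$ quantile of the exact bootstrap distribution of $-2\log\Lambda_n(\boldsymbol{X}_n^*,Y^* )$, $X_i^*,Y^*$ iid from $f(\cdot;\widehat\mu,\widehat\sigma)$ for any estimator $(\widehat\mu,\widehat\sigma)$) has coverage exactly $1-\alpha$ for all $(\mu_0,\sigma_0)$.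 *)

(* Defs.v *)
From HB Require Import structures.
From mathcomp Require Import all_boot all_order all_algebra.
From mathcomp Require Import all_classical all_reals all_analysis.

Set Implicit Arguments.
Unset Strict Implicit.
Unset Printing Implicit Defensive.

Import Order.TTheory GRing.Theory Num.Theory.
Local Open Scope classical_set_scope.
Local Open Scope ring_scope.

Section Defs.
Variable R : realType.

Definition is_density (phi : R -> R) : Prop :=
  [/\ measurable_fun [set: R] phi,
      (forall x, 0 <= phi x) &
      (\int[@lebesgue_measure R]_x (phi x)%:E = 1)%E].

Definition ls_dens (phi : R -> R) (mu sigma : R) (x : R) : R :=
  sigma^-1 * phi ((x - mu) / sigma).

Fixpoint iterint (k : nat) (F : seq R -> \bar R) : \bar R :=
  match k with
  | 0 => F [::]
  | k'.+1 => (\int[@lebesgue_measure R]_t iterint k' (fun s => F (t :: s)))%E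
  end.

(* Law of an iid sample s = y :: x_1 :: ... :: x_n (n.+1 observations) with
   common density g:  P(s \in E) = \int ... \int 1_E(s) prod_i g(s_i) ds. *)
Definition iid_law (n : nat) (g : R -> R) (E : set (seq R)) : \bar R :=
  iterint n.+1 (fun s => ((\prod_(v <- s) g v) * \1_E s)%:E).

Definition sup_null (phi : R -> R) (xs : seq R) (y : R) : \bar R :=
  ereal_sup [set (ls_dens phi p.1 p.2 y *
                  \prod_(x <- xs) ls_dens phi p.1 p.2 x)%:E
            | p in [set p : R * R | 0 < p.2]].

(* denominator: sup_{mu, mu_y, sigma>0} f(y;mu_y,sigma) prod_i f(x_i;mu,sigma);
   p = ((mu, mu_y), sigma) *)
Definition sup_full (phi : R -> R) (xs : seq R) (y : R) : \bar R :=
  ereal_sup [set (ls_dens phi p.1.2 p.2 y *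
                  \prod_(x <- xs) ls_dens phi p.1.1 p.2 x)%:E
            | p in [set p : (R * R) * R | 0 < p.2]].

Definition Lambda (phi : R -> R) (xs : seq R) (y : R) : R :=
  fine (sup_null phi xs y) / fine (sup_full phi xs y).

Definition LambdaS (phi : R -> R) (s : seq R) : R :=
  Lambda phi (behead s) (head 0%R s).

Definition LRstat (phi : R -> R) (s : seq R) : R :=
  - 2 * ln (LambdaS phi s).

Definition sups_fin_pos (phi : R -> R) (s : seq R) : Prop :=
  ((0 < sup_null phi (behead s) (head 0%R s) < +oo) /\
   (0 < sup_full phi (behead s) (head 0%R s) < +oo))%E.

Definition quantile (F : R -> R) (alpha : R) : R :=
  inf [set t | 1 - alpha <= F t].

Definition LR_cdf (phi : R -> R) (n : nat) (g : R -> R) (t : R) : R :=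
  fine (iid_law n g [set s | LRstat phi s <= t]).

Definition boot_crit (phi : R -> R) (n : nat) (muh sigh : seq R -> R)
    (alpha : R) (xs : seq R) : R :=
  quantile (LR_cdf phi n (ls_dens phi (muh xs) (sigh xs))) alpha.

End Defs.

(* Main.v *)
Require Import Defs.
From HB Require Import structures.
From mathcomp Require Import all_boot all_order all_algebra.
From mathcomp Require Import all_classical all_reals all_analysis.
From mathcomp Require Import ring lra.
From mathcomp Require Import measurable_realfun.
Import Order.TTheory GRing.Theory Num.Theory.
Import numFieldNormedType.Exports.
Local Open Scope classical_set_scope.
Local Open Scope ring_scope.
Section S.
Variable R : realType.
Local Notation lam := (@lebesgue_measure R).
Variables (m s : R) (s0 : 0 < s).
Definition aff (z : R) : R := m + s * z.

Lemma aff_mfun : measurable_fun (T:=measurableTypeR R) (U:=measurableTypeR R) setT aff.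
Proof.
apply: measurable_realfun.continuous_measurable_fun => z.
rewrite /aff; apply: continuousD; first exact: cst_continuous.
apply: continuousM; [exact: cst_continuous|exact: (fun x => cvg_id)].
Qed.

Definition snn : {nonneg R} := NngNum (ltW s0).

Definition paff := measure_function_pushforward__canonical__measure_function_Measure lam aff_mfun.

Lemma aff_measure (E : set (measurableTypeR R)) : measurable E ->
  lam E = mscale snn paff E.
Proof.
move=> mE; have := (@lebesgue_measure_unique R (mscale snn paff)). move=> H; apply: H => // X /ocitvP [->|[[a b] /= ab ->]].
  by rewrite !measure0.
rewrite /mscale /=. change (paff `]a, b]%classic) with (lam (aff @^-1` `]a, b]%classic)).
rewrite /pushforward. have -> : aff @^-1` `]a, b] = `](a - m) / s, (b - m) / s]%classic.
  apply/seteqP; split => z; rewrite /= !in_itv /= /aff.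
    move=> /andP[h1 h2]; apply/andP; split.
      by rewrite ltr_pdivrMr // ltrBlDl mulrC.
    by rewrite ler_pdivlMr // lerBrDl mulrC.
  move=> /andP[h1 h2]; apply/andP; split.
    by move: h1; rewrite ltr_pdivrMr // ltrBlDl mulrC.
  by move: h2; rewrite ler_pdivlMr // lerBrDl mulrC.
rewrite !lebesgue_measure_itv /= !lte_fin ab.
have -> : (a - m) / s < (b - m) / s.
  by rewrite ltr_pM2r ?invr_gt0 // ltrBlDr subrK.
rewrite -!EFinD -EFinM; congr (_%:E).
by field; rewrite gt_eqF.
Qed.
Local Open Scope ereal_scope.
Import HBNNSimple.


Lemma int_mono (f g : R -> \bar R) : (forall x, 0 <= f x) -> (forall x, f x <= g x) ->
  \int[lam]_x f x <= \int[lam]_x g x.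
Proof.
move=> f0 fg.
have g0 : forall x, 0 <= g x by move=> x; exact: le_trans (f0 x) (fg x).
rewrite !ge0_integralTE//.
apply: ereal_sup_le => _ [h hf <-]; exists h => //= x; exact: le_trans (hf x) (fg x).
Qed.

Lemma int_ub (f : R -> \bar R) (X : \bar R) : (forall x, 0 <= f x) ->
  (forall h : {nnsfun measurableTypeR R >-> R}, (forall x, (h x)%:E <= f x) -> \int[lam]_x (h x)%:E <= X) ->
  \int[lam]_x f x <= X.
Proof.
move=> f0 H; rewrite ge0_integralTE//.
apply: ge_ereal_sup => _ [h hf <-]; have := H h hf.
by rewrite integral_nnsfun// patch_setT.
Qed.

Lemma mcov (g : measurableTypeR R -> \bar R) : measurable_fun setT g -> (forall x, 0 <= g x) ->
  \int[lam]_x g x = s%:E * \int[lam]_x (g \o aff) x.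
Proof.
move=> mg g0.
rewrite (eq_measure_integral (mscale snn paff)); last by move=> A mA _; exact: aff_measure.
rewrite ge0_integral_mscale //.
rewrite (@ge0_integral_pushforward _ _ (measurableTypeR R) (measurableTypeR R) R aff aff_mfun lam setT g measurableT mg); last by move=> y _.
by rewrite preimage_setT.
Qed.

Lemma cov_le (f : R -> \bar R) : (forall x, 0 <= f x) ->
  \int[lam]_x f x <= s%:E * \int[lam]_x (f \o aff) x.
Proof.
move=> f0; apply: int_ub => // h hf.
have mh : measurable_fun setT (fun x : measurableTypeR R => (h x)%:E).
  by apply/measurable_EFinP; exact: measurable_funPT.
rewrite (mcov _ mh) //.
rewrite lee_pmul2l ?lte_fin //; apply: int_mono => // x /=.
- by rewrite lee_fin.
- exact: hf.
- by move=> x; rewrite lee_fin.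
Qed.
End S.
Arguments aff {R}.
Arguments cov_le {R}.

Section S2.
Variable R : realType.
Import HBNNSimple.
Local Notation lam := (@lebesgue_measure R).
Local Open Scope ereal_scope.

Lemma cov (m s : R) (s0 : (0 < s)%R) (f : R -> \bar R) : (forall x, 0 <= f x) ->
  \int[lam]_x f x = s%:E * \int[lam]_x (f \o aff m s) x.
Proof.
move=> f0; apply/eqP; rewrite eq_le cov_le //=.
have si0 : (0 < s^-1)%R by rewrite invr_gt0.
have := cov_le (- m / s)%R s^-1 si0 (f \o aff m s) (fun x => f0 _).
have -> : (f \o aff m s) \o aff (- m / s)%R s^-1 = f.
  apply/funext => x; rewrite /aff /=; congr f.
  by field; rewrite gt_eqF.
move=> H.
rewrite -(lee_pmul2l (x := s%:E)) ?lte_fin // in H.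
by rewrite muleA -EFinM divff ?gt_eqF // mul1e in H.
Qed.

Lemma int_scale_lt (c : R) (f : R -> \bar R) : (0 < c)%R -> (forall x, 0 <= f x) ->
  \int[lam]_x (c%:E * f x) <= c%:E * \int[lam]_x f x.
Proof.
move=> c0 f0; apply: int_ub => [x|h hf].
  by rewrite mule_ge0 // lee_fin ltW.
have ci0 : (0 < c^-1)%R by rewrite invr_gt0.
have -> : (fun x => (h x)%:E) = (fun x => c%:E * (c^-1 * h x)%:E).
  by apply/funext => x; rewrite -EFinM mulrA divff ?gt_eqF // mul1r.
rewrite ge0_integralZl //; last 3 first.
- by apply/measurable_EFinP; apply: measurable_funM => //; exact: measurable_funPT.
- by move=> x _; rewrite lee_fin mulr_ge0 // ltW.
- by rewrite lee_fin ltW.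
rewrite lee_pmul2l ?lte_fin //; apply: int_mono => x.
  by rewrite lee_fin mulr_ge0 // ltW.
rewrite EFinM; have := hf x.
rewrite -(lee_pmul2l (x := c^-1%:E)) ?lte_fin //.
by rewrite muleA -[(c^-1)%:E * c%:E]EFinM mulVf ?gt_eqF // mul1e.
Qed.

Lemma int_scale (c : R) (f : R -> \bar R) : (0 <= c)%R -> (forall x, 0 <= f x) ->
  \int[lam]_x (c%:E * f x) = c%:E * \int[lam]_x f x.
Proof.
move=> c0 f0; have [->|cn0] := eqVneq c 0%R.
  rewrite mul0e; under eq_integral do rewrite mul0e.
  by rewrite integral0.
have cp : (0 < c)%R by rewrite lt_neqAle eq_sym cn0.
have ci0 : (0 < c^-1)%R by rewrite invr_gt0.
apply/eqP; rewrite eq_le int_scale_lt //=.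
have cpE : 0 <= c%:E by rewrite lee_fin ltW.
have := int_scale_lt c^-1 (fun x => c%:E * f x) ci0 (fun x => mule_ge0 cpE (f0 x)).
under eq_integral do rewrite muleA -EFinM mulVf ?gt_eqF // mul1e.
move=> H; rewrite -(lee_pmul2l (x := c^-1%:E)) ?lte_fin //.
by rewrite muleA -EFinM mulVf ?gt_eqF // mul1e.
Qed.

Lemma iterint_ge0 k (F : seq R -> \bar R) : (forall u, 0 <= F u) -> 0 <= iterint k F.
Proof.
elim: k F => [|k IH] F F0 /=; first exact: F0.
by apply: integral_ge0 => t _; apply: IH.
Qed.

Lemma iterint_scale k (F : seq R -> \bar R) (c : R) : (0 <= c)%R -> (forall u, 0 <= F u) ->
  iterint k (fun u => c%:E * F u) = c%:E * iterint k F.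
Proof.
elim: k F => [|k IH] F c0 F0 //=.
have -> : (fun t => iterint k (fun u => c%:E * F (t :: u))) =
          (fun t => c%:E * iterint k (fun u => F (t :: u))).
  by apply/funext => t; rewrite IH.
by rewrite int_scale // => t; apply: iterint_ge0.
Qed.

Lemma iterint_ext k (F G : seq R -> \bar R) : (forall u, size u = k -> F u = G u) ->
  iterint k F = iterint k G.
Proof.
elim: k F G => [|k IH] F G FG /=; first exact: FG.
have -> : (fun t => iterint k (fun u => F (t :: u))) =
          (fun t => iterint k (fun u => G (t :: u))).
  by apply/funext => t; apply: IH => u su; apply: FG; rewrite /= su.
by [].
Qed.

Lemma iterint_mono k (F G : seq R -> \bar R) : (forall u, 0 <= F u) -> (forall u, F u <= G u) ->
  iterint k F <= iterint k G.
Proof.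
elim: k F G => [|k IH] F G F0 FG /=; first exact: FG.
apply: int_mono => [t|t]; first exact: iterint_ge0.
by apply: IH.
Qed.

Lemma iterint_cov (m s : R) (s0 : (0 < s)%R) k (F G : seq R -> \bar R) :
  (forall u, 0 <= F u) ->
  (forall u, size u = k -> G u = (s ^+ k)%:E * F (map (aff m s) u)) ->
  iterint k F = iterint k G.
Proof.
elim: k F G => [|k IH] F G F0 FG /=.
  by rewrite FG // expr0 mul1e.
rewrite (cov m _ s0); last by move=> t; apply: iterint_ge0.
have e1 : forall z, iterint k (fun u => F (aff m s z :: u)) =
   (s ^+ k)%:E * iterint k (fun u => F (map (aff m s) (z :: u))).
  move=> z; rewrite -iterint_scale //; last by rewrite exprn_ge0 // ltW.
  by apply: IH.
have e2 : forall z, iterint k (fun u => G (z :: u)) =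
   (s ^+ k.+1)%:E * iterint k (fun u => F (map (aff m s) (z :: u))).
  move=> z; rewrite -iterint_scale //; last by rewrite exprn_ge0 // ltW.
  by apply: iterint_ext => u su; rewrite FG //= su.
have -> : (fun t => iterint k (fun u => F (t :: u))) \o aff m s =
   (fun z => (s ^+ k)%:E * iterint k (fun u => F (map (aff m s) (z :: u)))).
  by apply/funext => z; rewrite /= e1.
have -> : (fun t => iterint k (fun u => G (t :: u))) =
   (fun z => (s ^+ k.+1)%:E * iterint k (fun u => F (map (aff m s) (z :: u)))).
  by apply/funext => z; rewrite e2.
rewrite int_scale; [|by rewrite exprn_ge0 // ltW|by move=> z; apply: iterint_ge0].
rewrite int_scale; [|by rewrite exprn_ge0 // ltW|by move=> z; apply: iterint_ge0].
by rewrite muleA -EFinM exprS.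
Qed.
End S2.

Section S3.
Variable R : realType.
Variable phi : R -> R.

Definition vnull (xs : seq R) (y a b : R) : R :=
  ls_dens phi a b y * \prod_(x <- xs) ls_dens phi a b x.
Definition vfull (xs : seq R) (y a1 a2 b : R) : R :=
  ls_dens phi a2 b y * \prod_(x <- xs) ls_dens phi a1 b x.

Variables (m s : R) (s0 : 0 < s).

Lemma ls_aff a b x : ls_dens phi a b (aff m s x) = s^-1 * ls_dens phi ((a - m) / s) (b / s) x.
Proof.
rewrite /ls_dens /aff.
have [->|b0] := eqVneq b 0; first by rewrite !(mul0r, invr0, mulr0).
have -> : (x - (a - m) / s) / (b / s) = (m + s * x - a) / b.
  by field; rewrite b0 gt_eqF.
by field; rewrite b0 gt_eqF.
Qed.

Lemma prod_aff a b xs : \prod_(x <- map (aff m s) xs) ls_dens phi a b x =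
  s^-1 ^+ size xs * \prod_(x <- xs) ls_dens phi ((a - m) / s) (b / s) x.
Proof.
elim: xs => [|x xs IH]; first by rewrite !big_nil expr0 mulr1.
by rewrite /= !big_cons IH ls_aff exprS; ring.
Qed.

Lemma vnull_aff xs y a b : vnull (map (aff m s) xs) (aff m s y) a b =
  s^-1 ^+ (size xs).+1 * vnull xs y ((a - m) / s) (b / s).
Proof. by rewrite /vnull prod_aff ls_aff exprS; ring. Qed.

Lemma vfull_aff xs y a1 a2 b : vfull (map (aff m s) xs) (aff m s y) a1 a2 b =
  s^-1 ^+ (size xs).+1 * vfull xs y ((a1 - m) / s) ((a2 - m) / s) (b / s).
Proof. by rewrite /vfull prod_aff ls_aff exprS; ring. Qed.

Lemma sup_null_aff xs y : sup_null phi (map (aff m s) xs) (aff m s y) =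
  ((s^-1 ^+ (size xs).+1)%:E * sup_null phi xs y)%E.
Proof.
have c0 : 0 < s^-1 ^+ (size xs).+1 by rewrite exprn_gt0 // invr_gt0.
rewrite /sup_null -ereal_sup_pZl //; congr ereal_sup.
apply/seteqP; split.
  move=> _ [[a b] /= b0 <-].
  exists (vnull xs y ((a - m) / s) (b / s))%:E.
    by exists ((a - m) / s, b / s) => //=; rewrite divr_gt0.
  by rewrite -EFinM -vnull_aff.
move=> _ [_ [[a b] /= b0 <-] <-].
exists (m + s * a, s * b); first by rewrite /= mulr_gt0.
rewrite /= -EFinM; congr (_%:E).
have := vnull_aff xs y (m + s * a) (s * b); rewrite /vnull => ->.
have -> : (m + s * a - m) / s = a by field; rewrite gt_eqF.
have -> : s * b / s = b by field; rewrite gt_eqF.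
by [].
Qed.

Lemma sup_full_aff xs y : sup_full phi (map (aff m s) xs) (aff m s y) =
  ((s^-1 ^+ (size xs).+1)%:E * sup_full phi xs y)%E.
Proof.
have c0 : 0 < s^-1 ^+ (size xs).+1 by rewrite exprn_gt0 // invr_gt0.
rewrite /sup_full -ereal_sup_pZl //; congr ereal_sup.
apply/seteqP; split.
  move=> _ [[[a1 a2] b] /= b0 <-].
  exists (vfull xs y ((a1 - m) / s) ((a2 - m) / s) (b / s))%:E.
    by exists (((a1 - m) / s, (a2 - m) / s), b / s) => //=; rewrite divr_gt0.
  by rewrite -EFinM -vfull_aff.
move=> _ [_ [[[a1 a2] b] /= b0 <-] <-].
exists ((m + s * a1, m + s * a2), s * b); first by rewrite /= mulr_gt0.
rewrite /= -EFinM; congr (_%:E).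
have := vfull_aff xs y (m + s * a1) (m + s * a2) (s * b); rewrite /vfull => ->.
have -> : (m + s * a1 - m) / s = a1 by field; rewrite gt_eqF.
have -> : (m + s * a2 - m) / s = a2 by field; rewrite gt_eqF.
have -> : s * b / s = b by field; rewrite gt_eqF.
by [].
Qed.

Lemma fineZ (c : R) (X : \bar R) : 0 < c -> fine (c%:E * X)%E = c * fine X.
Proof.
move=> c0; case: X => [r||].
- by [].
- by rewrite mulry gtr0_sg // mul1e /= mulr0.
- by rewrite mulrNy gtr0_sg // mul1e /= mulr0.
Qed.

Lemma LambdaS_aff u : LambdaS phi (map (aff m s) u) = LambdaS phi u.
Proof.
case: u => [|y xs] //=; rewrite /LambdaS /= /Lambda.
rewrite sup_null_aff sup_full_aff !fineZ ?exprn_gt0 ?invr_gt0 //.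
set c := s^-1 ^+ _.
have c0 : c != 0 by rewrite /c expf_neq0 // invr_eq0 gt_eqF.
by rewrite invfM mulrACA divff // mul1r.
Qed.
End S3.

Section S4.
Variable R : realType.
Variable phi : R -> R.
Hypothesis phi0 : forall x, 0 <= phi x.
Local Open Scope ereal_scope.

Lemma ls_ge0 a b x : (0 < b)%R -> (0 <= ls_dens phi a b x)%R.
Proof. by move=> b0; rewrite /ls_dens mulr_ge0 // invr_ge0 ltW. Qed.

Lemma indic_ge0' (A : set (seq R)) u : (0 <= \1_A u :> R)%R.
Proof. by rewrite indicE; case: (_ \in _). Qed.

Lemma indic_le1 (A : set (seq R)) u : (\1_A u <= 1 :> R)%R.
Proof. by rewrite indicE; case: (_ \in _). Qed.

Lemma prod_ge0 (g : R -> R) u : (forall x, 0 <= g x)%R -> (0 <= \prod_(v <- u) g v)%R.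
Proof. by move=> g0; apply: prodr_ge0 => v _; exact: g0. Qed.

Lemma iid_pivot n (E : set (seq R)) mu sigma : (0 < sigma)%R ->
  (forall u, E (map (aff mu sigma) u) = E u) ->
  iid_law n (ls_dens phi mu sigma) E = iid_law n phi E.
Proof.
move=> s0 EE; rewrite /iid_law; apply: (@iterint_cov R mu sigma s0).
  move=> u; rewrite lee_fin mulr_ge0 ?indic_ge0' //.
  by apply: prod_ge0 => x; exact: ls_ge0.
move=> u su; rewrite -EFinM; congr (_%:E).
rewrite prod_aff //. rewrite subrr mul0r divff ?gt_eqF //.
have -> : (\prod_(x <- u) ls_dens phi 0 1 x = \prod_(x <- u) phi x)%R.
  by apply: eq_bigr => x _; rewrite /ls_dens invr1 mul1r subr0 mulr1.
have -> : (\1_E (map (aff mu sigma) u) = \1_E u :> R)%R.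
  have mE : (map (aff mu sigma) u \in E) = (u \in E).
    by apply/idP/idP => /set_mem H; apply/mem_set; rewrite ?EE // -EE.
  by rewrite !indicE mE.
rewrite su mulrA mulrA -exprMn mulfV ?gt_eqF // expr1n mul1r.
by [].
Qed.

Lemma iterint_prod1 k : (\int[@lebesgue_measure R]_x (phi x)%:E = 1) ->
  iterint k (fun u => (\prod_(v <- u) phi v)%:E) = 1.
Proof.
move=> H; elim: k => [|k IH] /=; first by rewrite big_nil.
have -> : (fun t => iterint k (fun u => (\prod_(v <- t :: u) phi v)%:E)) =
          (fun t => (phi t)%:E).
  apply/funext => t.
  have -> : (fun u => (\prod_(v <- t :: u) phi v)%:E) =
            (fun u => (phi t)%:E * (\prod_(v <- u) phi v)%:E).
    by apply/funext => u; rewrite big_cons EFinM.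
  rewrite iterint_scale //; first by rewrite IH mule1.
  by move=> u; rewrite lee_fin; apply: prod_ge0.
exact: H.
Qed.

Lemma iid_law_le1 n E : (\int[@lebesgue_measure R]_x (phi x)%:E = 1) ->
  iid_law n phi E <= 1.
Proof.
move=> H; rewrite -(iterint_prod1 n.+1 H) /iid_law; apply: iterint_mono.
  by move=> u; rewrite lee_fin mulr_ge0 ?indic_ge0' ?prod_ge0.
move=> u; rewrite lee_fin -{2}(mulr1 (\prod_(v <- u) phi v)%R).
by rewrite ler_wpM2l ?prod_ge0 ?indic_le1.
Qed.

Lemma iid_law_ge0 n E : 0 <= iid_law n phi E.
Proof.
by apply: iterint_ge0 => u; rewrite lee_fin mulr_ge0 ?indic_ge0' ?prod_ge0.
Qed.

Lemma iid_law_mono n (E1 E2 : set (seq R)) : E1 `<=` E2 -> iid_law n phi E1 <= iid_law n phi E2.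
Proof.
move=> E12; apply: iterint_mono.
  by move=> u; rewrite lee_fin mulr_ge0 ?indic_ge0' ?prod_ge0.
move=> u; rewrite lee_fin ler_wpM2l ?prod_ge0 // !indicE.
case: (boolP (u \in E1)) => [/set_mem /E12 /mem_set -> //|_].
by case: (_ \in _).
Qed.

Lemma iid_law_set0 n : iid_law n phi set0 = 0.
Proof.
rewrite /iid_law.
have -> : (fun s => ((\prod_(v <- s) phi v) * \1_set0 s)%:E) =
          (fun s => 0%:E * (\prod_(v <- s) phi v)%:E).
  by apply/funext => s; rewrite indicE in_set0 mulr0 mul0e.
by rewrite iterint_scale // ?mul0e // => u; rewrite lee_fin prod_ge0.
Qed.

Lemma Lambda_le1 xs y : (Lambda phi xs y <= 1)%R.
Proof.
have ND : sup_null phi xs y <= sup_full phi xs y.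
  apply: ereal_sup_le => _ [[a b] /= b0 <-].
  by exists ((a, a), b).
have D0 : 0 <= sup_full phi xs y.
  apply: le_trans (ereal_sup_ubound _); last first.
    by exists ((0%R, 0%R), 1%R) => //=.
  by rewrite lee_fin mulr_ge0 ?ls_ge0 ?prod_ge0 // => x; rewrite ls_ge0.
rewrite /Lambda; move: ND D0.
case: (sup_full phi xs y) => [r||] ND D0 /=.
- have [->|rn0] := eqVneq r 0%R; first by rewrite invr0 mulr0.
  have r0 : (0 < r)%R by rewrite lt_neqAle eq_sym rn0 -lee_fin.
  rewrite ler_pdivrMr // mul1r.
  move: ND; case: (sup_null phi xs y) => [a||] //=.
- by rewrite invr0 mulr0.
- by [].
Qed.

Lemma LambdaS_le1 u : (LambdaS phi u <= 1)%R.
Proof. exact: Lambda_le1. Qed.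

Lemma LRstat_ge0 u : (0 <= LRstat phi u)%R.
Proof.
rewrite /LRstat; have := ln_le0 (LambdaS_le1 u).
set l := ln _ => l0.
by rewrite mulNr oppr_ge0 mulr_ge0_le0.
Qed.
End S4.

Theorem theorem1 (R : realType) (phi : R -> R) (n : nat)
  (Hphi : is_density phi)
  (Has : forall mu sigma : R, 0 < sigma ->
     iid_law n (ls_dens phi mu sigma) [set s | sups_fin_pos phi s] = 1%E) :
  (forall (B : set R), measurable B ->
   forall mu0 sigma0 : R, 0 < sigma0 ->
     iid_law n (ls_dens phi mu0 sigma0) [set s | B (LambdaS phi s)] =
     iid_law n phi [set s | B (LambdaS phi s)]) /\
  (forall (alpha : R) (muh sigh : seq R -> R),
     0 < alpha < 1 ->
     (forall xs, 0 < sigh xs) ->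
     LR_cdf phi n phi t @[t --> +oo%R] --> (1 : R) ->
     {for quantile (LR_cdf phi n phi) alpha, continuous (LR_cdf phi n phi)} ->
     forall mu0 sigma0 : R, 0 < sigma0 ->
       iid_law n (ls_dens phi mu0 sigma0)
         [set s | LRstat phi s <= boot_crit phi n muh sigh alpha (behead s)] =
       (1 - alpha)%:E).
Proof.
have [_ phi0 Hint] := Hphi.
have LRaff : forall m s u, 0 < s -> LRstat phi (map (aff m s) u) = LRstat phi u.
  by move=> m s u s0; rewrite /LRstat LambdaS_aff.
split.
  move=> B _ mu0 sigma0 s0; apply: (@iid_pivot R phi phi0) => // u /=.
  by rewrite LambdaS_aff.
move=> alpha muh sigh /andP[a0 a1] sigh0 Hcvg Hcont mu0 sigma0 s0.
have FE : forall m s, 0 < s -> LR_cdf phi n (ls_dens phi m s) = LR_cdf phi n phi.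
  move=> m s ss; apply/funext => t; rewrite /LR_cdf (@iid_pivot R phi phi0) // => u /=.
  by rewrite LRaff.
have BC : forall xs, boot_crit phi n muh sigh alpha xs = quantile (LR_cdf phi n phi) alpha.
  by move=> xs; rewrite /boot_crit FE.
set F := LR_cdf phi n phi in Hcvg Hcont BC *.
set q := quantile F alpha in Hcont BC *.
have -> : [set s | LRstat phi s <= boot_crit phi n muh sigh alpha (behead s)] =
          [set s | LRstat phi s <= q].
  by apply/funext => s; rewrite /= BC.
rewrite (@iid_pivot R phi phi0) //; last by move=> u /=; rewrite LRaff.
set L := fun t => iid_law n phi [set s | LRstat phi s <= t].
have FL : forall t, F t = fine (L t) by [].
have L0 : forall t, (0 <= L t)%E by move=> t; exact: (@iid_law_ge0 R phi phi0).
have L1 : forall t, (L t <= 1)%E by move=> t; exact: (@iid_law_le1 R phi phi0).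
have Lfin : forall t, L t \is a fin_num.
  by move=> t; rewrite ge0_fin_numE // (le_lt_trans (L1 t)) // ltry.
have Fmono : forall t1 t2, t1 <= t2 -> F t1 <= F t2.
  move=> t1 t2 t12; rewrite !FL fine_le //.
  by apply: (@iid_law_mono R phi phi0) => s /= h; exact: le_trans h t12.
have Fneg : forall t, t < 0 -> F t = 0.
  move=> t t0; rewrite FL /L.
  have -> : [set s | LRstat phi s <= t] = set0.
    apply/funext => s /=; apply/propext; split => // h.
    by have := @LRstat_ge0 R phi phi0 s; rewrite leNgt (le_lt_trans h t0).
  by rewrite iid_law_set0.
set S := [set t | 1 - alpha <= F t].
have Sne : S !=set0.
  have [|M [_ HM]] := cvgr_gt _ Hcvg (1 - alpha).
    by rewrite ltrBlDr ltrDl.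
  exists (M + 1); apply: ltW; apply: HM.
  by rewrite ltrDl.
have Slb : has_lbound S.
  exists 0 => t St; rewrite leNgt; apply/negP => t0.
  by move: St; rewrite /S /= Fneg // subr_le0 leNgt a1.
have qE : q = inf S by [].
have Fq1 : 1 - alpha <= F q.
  rewrite leNgt; apply/negP => Fq.
  have /nbhs_ballP [e /= e0 He] : \forall t \near q, F t < 1 - alpha.
    by apply: (cvgr_lt _ Hcont).
  have e20 : 0 < e / 2 by rewrite divr_gt0.
  have : F (q + e / 2) < 1 - alpha.
    apply: He; rewrite /ball /= opprD addrA subrr add0r normrN gtr0_norm //.
    by rewrite ltr_pdivrMr // ltr_pMr // ltr1n.
  have qlt : inf S < q + e / 2 by rewrite -qE ltrDl.
  have [y Sy ylt] := inf_lt Sne qlt.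
  move=> H; move: Sy; rewrite /S /= => Sy.
  have := le_lt_trans (le_trans Sy (Fmono _ _ (ltW ylt))) H.
  by rewrite ltxx.
have Fq2 : F q <= 1 - alpha.
  rewrite leNgt; apply/negP => Fq.
  have /nbhs_ballP [e /= e0 He] : \forall t \near q, 1 - alpha < F t.
    by apply: (cvgr_gt _ Hcont).
  have e20 : 0 < e / 2 by rewrite divr_gt0.
  have : 1 - alpha < F (q - e / 2).
    apply: He; rewrite /ball /= opprB addrC subrK gtr0_norm //.
    by rewrite ltr_pdivrMr // ltr_pMr // ltr1n.
  move=> H; have Sq : S (q - e / 2) by rewrite /S /=; exact: ltW.
  have := ge_inf Slb Sq; rewrite -qE.
  move=> h; move: h e20; clear; move=> h e20; lra.
have Fq : F q = 1 - alpha by apply/eqP; rewrite eq_le Fq1 Fq2.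
rewrite -Fq FL fineK //.
Qed.
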